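(* Let $n\ge1$, $s\in\{1,\dots,n\}$, let $C\in\mathbb{R}^{n\times n}$ be symmetric positive definite and $z^*=\max\{\log\det(C_{S,S}) : S\subseteq\{1,\dots,n\},\ |S|=s\}$. For every $t$ with $0<t\le\lambda_{\min}(C)$, $$z^*=\max\Big\{\log\det\big(M_t(x)+tI\big) : x\in\{0,1\}^n,\ \textstyle\sum_{i=1}^n x_i=s\Big\}-(n-s)\log(t).$$
   Context: $\log$ is natural, $C_{S,S}$ is the principal submatrix indexed by $S$, $\lambda_{\min}(C)$ is the smallest eigenvalue of $C$. For $0\le t\le\lambda_{\min}(C)$ let $A(t)\in\mathbb{R}^{n\times n}$ be a Cholesky factor of $C-tI$ (so $C-tI=A(t)^\top A(t)$), with $i$-th column $a_i(t)$, and $M_t(x)=\sum_i x_i a_i(t)a_i(t)^\top$. *)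

(* Defs.v *)
From HB Require Import structures.
From mathcomp Require Import all_boot all_order all_algebra.
From mathcomp Require Import all_classical all_reals all_analysis.
Set Implicit Arguments. Unset Strict Implicit. Unset Printing Implicit Defensive.
Import Order.TTheory GRing.Theory Num.Theory.
Local Open Scope ring_scope.

Definition posdef (R : realType) (n : nat) (C : 'M[R]_n) : Prop :=
  C^T = C /\ forall v : 'cV[R]_n, v != 0 -> 0 < (v^T *m C *m v) 0 0.

Definition principal_submx (R : realType) (n : nat) (C : 'M[R]_n)
  (S : {set 'I_n}) : 'M[R]_#|S| :=
  \matrix_(i, j) C (enum_val i) (enum_val j).

(* smallest eigenvalue: infimum of the (finite, nonempty for symmetric C)
   set of real eigenvalues *)
Definition lambda_min (R : realType) (n : nat) (C : 'M[R]_n) : R :=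
  inf [set a : R | eigenvalue C a].

Definition cholesky_factor (R : realType) (n : nat) (A B : 'M[R]_n) : Prop :=
  [/\ forall i j : 'I_n, (j < i)%N -> A i j = 0,
      forall i : 'I_n, 0 <= A i i
    & B = A^T *m A].

Definition Mx (R : realType) (n : nat) (A : 'M[R]_n) (x : {ffun 'I_n -> bool})
  : 'M[R]_n :=
  \sum_(i < n) (x i)%:R *: (col i A *m (col i A)^T).

Definition zstar (R : realType) (n s : nat) (C : 'M[R]_n) : \bar R :=
  \big[Order.max/-oo%E]_(S : {set 'I_n} | #|S| == s)
     (ln (\det (principal_submx C S)))%:E.

Definition xmax (R : realType) (n s : nat) (A : 'M[R]_n) (t : R) : \bar R :=
  \big[Order.max/-oo%E]_(x : {ffun 'I_n -> bool} | (\sum_i (x i : nat))%N == s)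
     (ln (\det (Mx A x + t%:M)))%:E.

(* Main.v *)
Require Import Defs.
From HB Require Import structures.
From mathcomp Require Import all_boot all_order all_algebra.
From mathcomp Require Import all_classical all_reals all_analysis.
From mathcomp Require Import polyrcf.
From mathcomp Require Import ring lra.
Import Order.TTheory GRing.Theory Num.Theory.
Set Implicit Arguments. Unset Strict Implicit. Unset Printing Implicit Defensive.
Local Open Scope ring_scope.

Section Syl.
Variable R : realType.
Lemma sylvester (n m : nat) (X : 'M[R]_(n,m)) (Y : 'M[R]_(m,n)) (t : R) :
  t != 0 -> (m <= n)%N ->
  \det (X *m Y + t%:M) = t ^+ (n - m) * \det (Y *m X + t%:M).
Proof.
move=> t0 mn.
pose K : 'M[R]_m := 1%:M + t^-1 *: (Y *m X).
pose B : 'M[R]_(n + m) := block_mx t%:M X (- Y) 1%:M.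
have E1 : B = block_mx 1%:M X 0 1%:M *m block_mx (X *m Y + t%:M) 0 (- Y) 1%:M.
  rewrite mulmx_block ?mul1mx ?mul0mx ?mulmx0 ?mulmx1 ?add0r ?addr0.
  by rewrite mulmxN addrC addKr.
have E2 : B = block_mx t%:M 0 (- Y) K *m block_mx 1%:M (t^-1 *: X) 0 1%:M.
  rewrite mulmx_block ?mul1mx ?mul0mx ?mulmx0 ?mulmx1 ?add0r ?addr0.
  rewrite mul_scalar_mx scalerA divff // scale1r mulNmx /K.
  by rewrite -scalemxAr addrC -addrA subrr addr0.
have dB1 : \det B = \det (X *m Y + t%:M).
  by rewrite E1 det_mulmx det_ublock det_lblock !det1 !mul1r mulr1.
have dB2 : \det B = t ^+ n * \det K.
  by rewrite E2 det_mulmx det_ublock det_lblock ?det1 ?mulr1 ?det_scalar.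
have dK : \det (Y *m X + t%:M) = t ^+ m * \det K.
  rewrite -detZ /K scalerDr scalerA mulfV // scale1r addrC.
  by rewrite scalemx1.
rewrite dK mulrA -exprD subnK // -dB2 dB1 //.
Qed.
End Syl.

Lemma pd_det_gt0 (R : rcfType) m (M : 'M[R]_m) :
  (forall v : 'cV[R]_m, v != 0 -> 0 < (v^T *m M *m v) 0 0) -> 0 < \det M.
Proof.
move=> H.
pose Q : 'M[{poly R}]_m := \matrix_(i,j) ((i == j)%:R *: (1 - 'X) + M i j *: 'X).
have HQ u : (\det Q).[u] = \det ((1-u)%:M + u *: M).
  rewrite -horner_evalE -det_map_mx; congr (\det _); apply/matrixP => i j.
  rewrite !mxE /= horner_evalE !hornerE.
  by case: eqP => _ /=; ring.
have Hnz u : 0 < u -> u <= 1 -> \det ((1-u)%:M + u *: M) != 0.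
  move=> u0 u1; apply/negP => /det0P [v v0 Hv].
  have := H (v^T); rewrite trmx_eq0 trmxK => /(_ v0) Hb.
  have E : v *m ((1-u)%:M + u *: M) *m v^T = (1-u) *: (v *m v^T) + u *: (v *m M *m v^T).
    by rewrite mulmxDr mul_mx_scalar mulmxDl -scalemxAl -scalemxAr -scalemxAl.
  have Ha : 0 <= (v *m v^T) 0 0.
    rewrite mxE; apply: sumr_ge0 => j _; rewrite mxE; by rewrite -expr2 sqr_ge0.
  move: E; rewrite Hv mul0mx => /matrixP /(_ 0 0).
  move: Ha Hb; rewrite !mxE => Ha Hb E.
  nra.
have q0 : (\det Q).[0] = 1 by rewrite HQ subr0 scale0r addr0 det1.
have q1 : (\det Q).[1] = \det M.
  rewrite HQ subrr scale1r.
  have -> : (0:R)%:M = 0 :> 'M[R]_m by apply/matrixP=> i j; rewrite !mxE mul0rn.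
  by rewrite add0r.
rewrite ltNge; apply/negP => Hle.
have Hp : (\det Q).[0] * (\det Q).[1] <= 0 by rewrite q0 q1 mul1r.
have [x] := @polyrcf.poly_ivt R (\det Q) 0 1 ler01 Hp.
rewrite in_itv /= => /andP[x0 x1] /rootP rx.
have [xe|xn0] := eqVneq x 0; first by move: rx; rewrite xe q0 => /eqP; rewrite oner_eq0.
have : \det ((1 - x)%:M + x *: M) != 0 by apply: Hnz => //; rewrite lt_neqAle eq_sym xn0.
by rewrite -HQ rx eqxx.
Qed.

Section Main.
Variable R : realType.

Lemma sum_deltar n (F : 'I_n -> R) c : \sum_j F j * (c == j)%:R = F c.
Proof.
rewrite (bigD1 c) //= eqxx mulr1 big1 ?addr0 // => j /negPf.
by rewrite eq_sym => ->; rewrite mulr0.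
Qed.

Lemma sum_deltal n (F : 'I_n -> R) c : \sum_j (c == j)%:R * F j = F c.
Proof. by rewrite -(sum_deltar F c); apply: eq_bigr => j _; rewrite mulrC. Qed.

Definition selP n (S : {set 'I_n}) : 'M[R]_(#|S|, n) :=
  \matrix_(k, j) (enum_val k == j)%:R.

Lemma mulmx_selPt k n (S : {set 'I_n}) (M : 'M[R]_(k, n)) :
  M *m (selP S)^T = \matrix_(i, b) M i (enum_val b).
Proof.
apply/matrixP => i b; rewrite !mxE.
under eq_bigr => j _ do rewrite !mxE.
exact: (sum_deltar (fun j => M i j)).
Qed.

Lemma selP_mulmx k n (S : {set 'I_n}) (M : 'M[R]_(n, k)) :
  selP S *m M = \matrix_(a, j) M (enum_val a) j.
Proof.
apply/matrixP => a j; rewrite !mxE.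
under eq_bigr => l _ do rewrite !mxE.
exact: (sum_deltal (fun l => M l j)).
Qed.

Lemma selP_C n (S : {set 'I_n}) (C : 'M[R]_n) :
  selP S *m C *m (selP S)^T = principal_submx C S.
Proof.
rewrite mulmx_selPt selP_mulmx; apply/matrixP => a b; rewrite !mxE //.
Qed.

Lemma selP_PPt n (S : {set 'I_n}) : selP S *m (selP S)^T = 1%:M.
Proof.
rewrite mulmx_selPt; apply/matrixP => a b; rewrite !mxE.
by rewrite (inj_eq enum_val_inj).
Qed.

Lemma selP_PtP n (S : {set 'I_n}) :
  (selP S)^T *m selP S = diag_mx (\row_i (i \in S)%:R).
Proof.
apply/matrixP => i j; rewrite !mxE.
under eq_bigr => k _ do rewrite !mxE.
have [iS|niS] := boolP (i \in S).
  rewrite (bigD1 (enum_rank_in iS i)) //= enum_rankK_in // eqxx mul1r.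
  rewrite big1 ?addr0; first by [].
  move=> k /negPf kn.
  have -> : (enum_val k == i) = false.
    apply/negbTE/eqP => ek; move: kn; rewrite -[X in X == _](enum_valK_in iS k) ek eqxx //.
  by rewrite mul0r.
rewrite big1 ?mul0rn // => k _.
have -> : (enum_val k == i) = false.
  apply/negbTE/eqP => ek; move: niS; rewrite -ek enum_valP //.
by rewrite mul0r.
Qed.

Lemma Mx_diag n (A : 'M[R]_n) x :
  Mx A x = A *m diag_mx (\row_i (x i)%:R) *m A^T.
Proof.
apply/matrixP => j k; rewrite /Mx summxE mul_mx_diag !mxE.
apply: eq_bigr => i _; rewrite !mxE big_ord1 !mxE.
ring.
Qed.

Lemma det_Mx n (C A : 'M[R]_n) (t : R) (x : {ffun 'I_n -> bool}) :
  0 < t -> C - t%:M = A^T *m A ->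
  \det (Mx A x + t%:M) =
  t ^+ (n - #|[set i | x i]|) * \det (principal_submx C [set i | x i]).
Proof.
move=> t0 HC; set S := [set i | x i].
have -> : Mx A x = (A *m (selP S)^T) *m (selP S *m A^T).
  rewrite Mx_diag !mulmxA -[A *m _ *m selP S]mulmxA selP_PtP.
  have -> : \row_i (i \in S)%:R = \row_i (x i)%:R :> 'rV[R]_n by apply/rowP => i; rewrite !mxE inE.
  by [].
rewrite sylvester ?gt_eqF //; last by rewrite -[n in (_ <= n)%N]card_ord max_card.
congr (_ * \det _).
rewrite -selP_C !mulmxA -[selP S *m A^T *m A]mulmxA -HC.
rewrite mulmxBr mulmxBl mul_mx_scalar -scalemxAl selP_PPt scalemx1.
  by rewrite subrK.
Qed.

Lemma det_principal_gt0 n (C : 'M[R]_n) (S : {set 'I_n}) :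
  posdef C -> 0 < \det (principal_submx C S).
Proof.
move=> [_ HC]; apply: pd_det_gt0 => w w0.
rewrite -selP_C.
have -> : w^T *m (selP S *m C *m (selP S)^T) *m w
   = ((selP S)^T *m w)^T *m C *m ((selP S)^T *m w).
  by rewrite trmx_mul trmxK !mulmxA.
apply: HC; apply: contraNneq w0 => H0.
by rewrite -[w]mul1mx -selP_PPt -mulmxA H0 mulmx0.
Qed.

Lemma bigmax_addc (I : finType) (P : pred I) (F : I -> \bar R) (c : R) :
  (\big[Order.max/-oo%E]_(i | P i) (F i + c%:E)%E =
   \big[Order.max/-oo%E]_(i | P i) F i + c%:E)%E.
Proof.
apply: (big_rec2 (fun a b => a = (b + c%:E)%E)); first by rewrite addNye.
move=> i y1 y2 _ ->.
rewrite /Order.max lteD2rE //.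
by case: ifP.
Qed.

End Main.

Unset Implicit Arguments.
Theorem corollary3 (R : realType) (n s : nat) (C : 'M[R]_n) :
  (1 <= n)%N -> (1 <= s <= n)%N -> posdef C ->
  forall t : R, 0 < t -> t <= lambda_min C ->
  forall A : 'M[R]_n, cholesky_factor A (C - t%:M) ->
  zstar s C = (xmax s A t - ((n - s)%:R * ln t)%:E)%E.
Proof.
move=> _ _ HC t t0 _ A [_ _ HA].
set c := ((n - s)%:R * ln t).
have card_sum (x : {ffun 'I_n -> bool}) :
    (\sum_i (x i : nat))%N = #|[set i | x i]|.
  rewrite -sum1dep_card [RHS]big_mkcond /=; apply: eq_bigr => i _.
  by case: (x i).
have Hx : xmax s A t = (\big[Order.max/-oo%E]_(S : {set 'I_n} | #|S| == s)
    ((ln (\det (principal_submx C S)))%:E + c%:E))%E.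
  rewrite /xmax (reindex (fun S : {set 'I_n} => [ffun i => i \in S])) /=.
    apply: eq_big => S; have hS : [set i | [ffun i => i \in S] i] = S
      by apply/setP => i; rewrite inE ffunE.
      by rewrite card_sum hS.
    rewrite card_sum hS => /eqP HS.
    rewrite (det_Mx _ t0 HA) hS [in t ^+ _]HS -EFinD; congr (_%:E).
    rewrite lnM ?posrE ?exprn_gt0 ?det_principal_gt0 // lnXn // /c mulr_natl addrC //.
  exists (fun x : {ffun 'I_n -> bool} => [set i | x i]) => x _.
    by apply/setP => i; rewrite inE ffunE.
  by apply/ffunP => i; rewrite ffunE inE.
rewrite Hx bigmax_addc addeK //.
Qed.
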